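(* A graph $G$ has exactly one L-Grundy dominating set (i.e., is a unique L-Grundy domination graph) if and only if $\gamma_{gr}^{L}(G)=n(G)$, where $n(G)$ is the number of vertices of $G$.
   Context: For a graph $G$, $N(v)$ is the open neighborhood and $N[v]=N(v)\cup\{v\}$ the closed neighborhood of $v$. A sequence $(v_1,\ldots,v_k)$ of distinct vertices is an L-sequence if $N[v_i]\setminus\bigcup_{j=1}^{i-1}N(v_j)\neq\emptyset$ for each $i\in[k]$. The L-Grundy domination number $\gamma_{gr}^{L}(G)$ is the maximum length of an L-sequence; the vertex set of such a maximum-length L-sequence is an L-Grundy dominating set. *)

(* Defs.v *)
From mathcomp Require Import all_boot.
Set Implicit Arguments. Unset Strict Implicit. Unset Printing Implicit Defensive.

Definition simple_graph (T : finType) (e : rel T) : Prop :=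
  symmetric e /\ irreflexive e.

Section LGrundy.
Variables (T : finType) (e : rel T).

Definition openN (v : T) : {set T} := [set u | e v u].
Definition closedN (v : T) : {set T} := v |: openN v.

(* (v_1,...,v_k) is an L-sequence: distinct vertices with
   N[v_i] \ (N(v_1) u ... u N(v_{i-1})) nonempty for every i. *)
Definition is_Lseq (s : seq T) : bool :=
  uniq s &&
  [forall i : 'I_(size s),
     closedN (tnth (in_tuple s) i)
       :\: (\bigcup_(j : 'I_(size s) | j < i) openN (tnth (in_tuple s) j))
     != set0].

(* L-Grundy domination number: maximum length of an L-sequence.
   (Since L-sequences have distinct entries, their length is at most #|T|,
   so maximizing over lengths k <= #|T| is the maximum over all of them.) *)
Definition gamma_grL : nat :=
  \max_(k < #|T|.+1 | [exists t : k.-tuple T, is_Lseq t]) k.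

Definition is_LGrundy_dom_set (A : {set T}) : bool :=
  [exists t : gamma_grL.-tuple T, is_Lseq t && ([set x in t] == A)].

End LGrundy.

(* Main.v *)
Require Import Defs.
From mathcomp Require Import all_boot.
Set Implicit Arguments. Unset Strict Implicit. Unset Printing Implicit Defensive.

Section Aux.
Variables (T : finType) (e : rel T).

Fixpoint laux (U : {set T}) (s : seq T) : bool :=
  if s is x :: s' then (closedN e x :\: U != set0) && laux (U :|: openN e x) s'
  else true.

Lemma laux_cat U s1 s2 : laux U (s1 ++ s2) =
  laux U s1 && laux (U :|: \bigcup_(y <- s1) openN e y) s2.
Proof.
elim: s1 U => [|x s1 IH] U /=; first by rewrite big_nil setU0.
by rewrite IH big_cons setUA andbA.
Qed.

Lemma laux_mono (U V : {set T}) s : V \subset U -> laux U s -> laux V s.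
Proof.
elim: s U V => [|x s IH] U V //= VU /andP[h1 h2]; apply/andP; split.
  apply: contra h1; rewrite -!subset0 => h; apply: subset_trans h.
  by apply: setDS.
by apply: IH h2; apply: setSU.
Qed.

Lemma bigcup_prefix (x0 : T) s i : i <= size s ->
  \bigcup_(j : 'I_(size s) | j < i) openN e (tnth (in_tuple s) j)
  = \bigcup_(y <- take i s) openN e y.
Proof.
move=> hi.
rewrite (big_nth x0) size_takel // big_mkord.
rewrite (big_ord_widen_cond _ xpredT (fun j => openN e (nth x0 (take i s) j)) hi) //=.
apply: eq_big => [j|j hj] //; rewrite (tnth_nth x0) nth_take //.
Qed.

Lemma laux_all (x0 : T) U s : laux U s = all (fun i => closedN e (nth x0 s i) :\:
   (U :|: \bigcup_(y <- take i s) openN e y) != set0) (iota 0 (size s)).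
Proof.
elim: s U => [|x s IH] U //=.
rewrite big_nil setU0 IH -(addn0 1) iotaDl all_map; congr andb.
apply: eq_all => i /=; by rewrite big_cons setUA.
Qed.

Lemma isLseqE s : is_Lseq e s = uniq s && laux set0 s.
Proof.
rewrite /is_Lseq; congr andb; case: s => [|x0 s']; first by apply/forallP => -[].
rewrite (laux_all x0).
apply/forallP/allP => [H i|H i].
  rewrite mem_iota add0n => /= hi.
  have := H (Ordinal hi); rewrite (@bigcup_prefix x0 (x0 :: s') i (ltnW hi)) (tnth_nth x0) set0U //.
have hi : (i : nat) \in iota 0 (size (x0 :: s')) by rewrite mem_iota /=.
by have := H i hi; rewrite (bigcup_prefix x0 (ltnW (ltn_ord i))) (tnth_nth x0) set0U.
Qed.


Lemma uniq_size_le (s : seq T) : uniq s -> size s <= #|T|.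
Proof. by move/card_uniqP <-; apply: max_card. Qed.

Lemma gamma_ge s : is_Lseq e s -> size s <= gamma_grL e.
Proof.
move=> hs.
have hu : uniq s by move: hs; rewrite isLseqE => /andP[].
have hlt : size s < #|T|.+1 by rewrite ltnS uniq_size_le.
rewrite /gamma_grL.
apply: (@leq_bigmax_cond _ (fun k : 'I_#|T|.+1 => [exists t : k.-tuple T, is_Lseq e t]) (fun k => nat_of_ord k) (Ordinal hlt)).
by apply/existsP; exists (in_tuple s).
Qed.

Lemma gamma_att : exists t : (gamma_grL e).-tuple T, is_Lseq e t.
Proof.
have hA : 0 < #|[pred k : 'I_#|T|.+1 | [exists t : k.-tuple T, is_Lseq e t]]|.
  apply/card_gt0P; exists ord0; rewrite inE /=; apply/existsP.
  by exists [tuple]; rewrite isLseqE.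
have [i0 hi0 heq] := eq_bigmax_cond (fun k : 'I_#|T|.+1 => nat_of_ord k) hA.
rewrite /gamma_grL heq; by move: hi0; rewrite inE => /existsP.
Qed.


Lemma exchange s u : is_Lseq e s -> u \notin s ->
  closedN e u \subset \bigcup_(y <- s) openN e y ->
  exists s', [&& is_Lseq e s', size s' == size s & u \in s'].
Proof.
rewrite isLseqE => /andP[us ls] nus cov.
pose P i := closedN e u \subset \bigcup_(y <- take i s) openN e y.
have exP : exists i, P i by exists (size s); rewrite /P take_size.
case: (ex_minnP exP) => i Pi mini.
have uin : u \in closedN e u by rewrite /closedN setU11.
case: i Pi mini => [|j] Pj minj.
  by move: Pj; rewrite /P take0 big_nil subset0 => /eqP h; rewrite h inE in uin.
have hj : j < size s.
  rewrite ltnNge; apply/negP => hs.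
  by have := minj j; rewrite /P take_oversize // => /(_ cov); rewrite ltnn.
have nPj : ~~ P j by apply/negP => /minj; rewrite ltnn.
set v := nth u s j.
have sE : s = take j s ++ v :: drop j.+1 s by rewrite -drop_nth // cat_take_drop.
exists (take j s ++ u :: drop j.+1 s).
have szE : size s = size (take j s) + (size (drop j.+1 s)).+1 by rewrite {1}sE size_cat.
rewrite size_cat /= szE eqxx mem_cat inE eqxx orbT !andbT.
rewrite isLseqE; apply/andP; split.
  move: us; rewrite {1}sE !cat_uniq /= !negb_or => /and3P[-> /andP[_ ->] /andP[_ ->]].
  have h1 : u \notin take j s by apply/negP => h; move/negP: nus; apply; exact: mem_take h.
  have h2 : u \notin drop j.+1 s by apply/negP => h; move/negP: nus; apply; exact: mem_drop h.
  by rewrite h1 h2 /= ?andbT.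
move: ls; rewrite {1}sE !laux_cat => /andP[-> /=] /andP[_ l2].
rewrite setD_eq0 set0U nPj /=.
apply: laux_mono l2.
rewrite set0U subUset subsetUl /=.
apply: subset_trans (_ : openN e u \subset closedN e u) _; first by rewrite /closedN subsetUr.
by move: Pj; rewrite /P (take_nth u) // -cats1 big_cat big_seq1.
Qed.

End Aux.

Theorem corollary6p3 (T : finType) (e : rel T) :
  simple_graph e ->
  ((exists! A : {set T}, is_LGrundy_dom_set e A) <-> gamma_grL e = #|T|).
Proof.
move=> _; split.
  case=> A [HA Huq].
  have [t ht] := @gamma_att _ e.
  have hu : uniq t by move: ht; rewrite isLseqE => /andP[].
  apply/eqP; rewrite eqn_leq -{1}(size_tuple t) uniq_size_le //=.
  rewrite leqNgt; apply/negP => hlt.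
  have [u nu] : exists u, u \notin (t : seq T).
    apply/existsP; rewrite -negb_forall; apply/negP => /forallP hall.
    have : #|T| <= size t.
      apply: leq_trans (card_size t); apply: subset_leq_card; apply/subsetP => x _; exact: hall.
    by rewrite size_tuple leqNgt hlt.
  have cov : closedN e u \subset \bigcup_(y <- t) openN e y.
    rewrite -setD_eq0; apply: contraT => hne.
    have : is_Lseq e (t ++ [:: u]).
      have lt0 : laux e set0 t by move: ht; rewrite isLseqE => /andP[].
      by rewrite isLseqE laux_cat cat_uniq hu /= set0U hne lt0 ?orbF ?andbT nu.
    move/gamma_ge; rewrite size_cat size_tuple addn1 ltnn //.
  have [s' /and3P[hs' /eqP hsz us']] := exchange ht nu cov.
  have hsz' : size s' == gamma_grL e by rewrite hsz size_tuple.
  have e1 : is_LGrundy_dom_set e [set x in (t : seq T)].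
    by apply/existsP; exists t; rewrite ht eqxx.
  have e2 : is_LGrundy_dom_set e [set x in s'].
    by apply/existsP; exists (Tuple hsz'); rewrite hs' eqxx.
  have := Huq _ e1; rewrite (Huq _ e2) => /setP /(_ u).
  by rewrite !inE us' (negbTE nu).
move=> hg.
have full : forall t : (gamma_grL e).-tuple T, is_Lseq e t -> [set x in (t : seq T)] = setT.
  move=> t ht; have hu : uniq t by move: ht; rewrite isLseqE => /andP[].
  by apply/eqP; rewrite eqEcard subsetT cardsT cardsE (card_uniqP hu) size_tuple hg leqnn.
case: (gamma_att e) => t0 h0.
exists [set x in tval t0]; split => /=.
  by apply/existsP; exists t0; rewrite h0 eqxx.
move=> B /existsP[t' /andP[ht' /eqP <-]].
by rewrite (full _ h0) (full _ ht').
Qed.
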